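(* Let $p,q\ge0$ be integers, $n=p+q\ge1$, and $a\in\mathbb{R}_{p,q}$. Then: (a) if $n$ is even, $\displaystyle \langle a\rangle_0=\frac{1}{2^n}\sum_{J} e_J\, a\, e^J$; (b) if $n$ is odd, $\displaystyle \langle a\rangle_0=\frac{1}{2^{n+1}}\sum_{J} e_J\, a\, e^J+\frac{1}{2^{n+1}}\sum_{J} e_J\, a_*\, e^J$, where in both cases the sum runs over all strictly increasing multi-indices $J\subset\{1,\dots,n\}$ (of every length $0,1,\dots,n$, including the empty one).
   Context: $\mathbb{R}_{p,q}$ is the universal real Clifford algebra of $\mathbb{R}^n$, $n=p+q$, with basis $\{e_A\}$ indexed by strictly increasing multi-indices $A=(a_1<\dots<a_k)\subset\{1,\dots,n\}$ (with $e_\emptyset=1$, $e_A=e_{a_1}\cdots e_{a_k}$), subject to $e_i^2=1$ for $1\le i\le p$, $e_i^2=-1$ for $p+1\le i\le n$, and $e_ie_j=-e_je_i$ for $i\neq j$. Every $a\in\mathbb{R}_{p,q}$ decomposes as $a=\sum_{k=0}^n\langle a\rangle_k$ with $\langle a\rangle_k=\sum_{|A|=k}a_Ae_A$, $a_A\in\mathbb{R}$; $\langle a\rangle_0$ is the scalar part. The principal automorphism is $a_*=\sum_{k=0}^n(-1)^k\langle a\rangle_k$. Define $e^i=e_i$ if $1\le i\le p$ and $e^i=-e_i$ if $p+1\le i\le n$, and for $J=(j_1<\dots<j_k)$ set $e^J=e^{j_k}e^{j_{k-1}}\cdots e^{j_1}$ (with $e^\emptyset=1$). *)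

(* Defs.v *)
(* Concrete model of the universal real Clifford algebra R_{p,q}:
   an element is its coordinate function on the basis {e_A}, A ranging over
   subsets of {0,...,n-1} (0-based indices; index i corresponds to e_{i+1}). *)
From HB Require Import structures.
From mathcomp Require Import all_boot all_order all_algebra.
From mathcomp Require Import reals.
Set Implicit Arguments. Unset Strict Implicit. Unset Printing Implicit Defensive.
Import Order.TTheory GRing.Theory Num.Theory.
Local Open Scope ring_scope.

Section Clifford.
Variables (R : comNzRingType) (p q : nat).
Local Notation n := (p + q)%N.
Local Notation CL := {ffun {set 'I_n} -> R}.

Definition sq_sign (i : 'I_n) : R := if (i < p)%N then 1 else -1.

(* e_A e_B = blade_sign A B * e_{A Δ B}: sign from reordering (anticommutation)
   times the squares of the common generators *)
Definition blade_sign (A B : {set 'I_n}) : R :=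
  (-1) ^+ #|[set ab : 'I_n * 'I_n | [&& ab.1 \in A, ab.2 \in B & (ab.2 < ab.1)%N]]|
  * \prod_(i in A :&: B) sq_sign i.

Definition symdiff (A B : {set 'I_n}) : {set 'I_n} := (A :\: B) :|: (B :\: A).

Definition clmul (x y : CL) : CL :=
  [ffun C => \sum_(A : {set 'I_n}) \sum_(B : {set 'I_n} | symdiff A B == C)
               blade_sign A B * x A * y B].

Definition blade (A : {set 'I_n}) : CL := [ffun C => (C == A)%:R].
Definition clone : CL := blade set0.

Definition gen (i : 'I_n) : CL := blade [set i].
Definition genup (i : 'I_n) : CL := if (i < p)%N then gen i else - gen i.

Definition clprod (s : seq CL) : CL := foldr clmul clone s.

Definition incr (J : {set 'I_n}) : seq 'I_n :=
  sort (fun i j : 'I_n => (i <= j)%N) (enum J).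

Definition e_low (J : {set 'I_n}) : CL := clprod (map gen (incr J)).
Definition e_up (J : {set 'I_n}) : CL := clprod (map genup (rev (incr J))).

Definition clscale (c : R) (x : CL) : CL := [ffun A => c * x A].

Definition grade (k : nat) (a : CL) : CL := [ffun A : {set 'I_n} => if #|A| == k then a A else 0].

Definition princ (a : CL) : CL := \sum_(k < n.+1) clscale ((-1) ^+ k) (grade k a).

End Clifford.

Arguments sq_sign {R p q} i.
Arguments blade_sign {R p q} A B.
Arguments symdiff {p q} A B.
Arguments clmul {R p q} x y.
Arguments blade {R p q} A.
Arguments clone {R p q}.
Arguments gen {R p q} i.
Arguments genup {R p q} i.
Arguments clprod {R p q} s.
Arguments incr {p q} J.
Arguments e_low {R p q} J.
Arguments e_up {R p q} J.
Arguments clscale {R p q} c x.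
Arguments grade {R p q} k a.
Arguments princ {R p q} a.

(* Main.v *)
Require Import Defs.
From HB Require Import structures.
From mathcomp Require Import all_boot all_order all_algebra.
From mathcomp Require Import reals ring.
Set Implicit Arguments. Unset Strict Implicit. Unset Printing Implicit Defensive.
Import Order.TTheory GRing.Theory Num.Theory.
Local Open Scope ring_scope.

Section H.
Variables (R : comNzRingType) (p q : nat).
Local Notation n := (p + q)%N.
Local Notation CL := {ffun {set 'I_n} -> R}.
Implicit Types (A B C D J S : {set 'I_n}) (x y : CL).

Lemma symdiffC A B : symdiff A B = symdiff B A.
Proof. by apply/setP => i; rewrite !inE; case: (i \in A); case: (i \in B). Qed.

Lemma symdiffK A B : symdiff A (symdiff A B) = B.
Proof. by apply/setP => i; rewrite !inE; case: (i \in A); case: (i \in B). Qed.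

Lemma symdiff_eq A B C : (symdiff A B == C) = (B == symdiff A C).
Proof.
apply/eqP/eqP => [<-|->]; first by rewrite symdiffK.
by rewrite symdiffK.
Qed.

Lemma clmul_bladel J x D :
  clmul (blade J : CL) x D = blade_sign J (symdiff J D) * x (symdiff J D).
Proof.
rewrite ffunE (bigD1 J) //= [X in _ + X]big1 ?addr0 => [|A /negPf nAJ]; last first.
  by apply: big1 => B _; rewrite ffunE nAJ mulr0 mul0r.
rewrite (eq_bigl (fun B => B == symdiff J D)) => [|B]; last by rewrite symdiff_eq.
by rewrite big_pred1_eq ffunE eqxx mulr1.
Qed.

Lemma clmul_blader x J c C :
  clmul x (clscale c (blade J)) C =
  blade_sign (symdiff C J) J * x (symdiff C J) * c.
Proof.
rewrite ffunE.
rewrite (eq_bigr (fun A => if A == symdiff C J then blade_sign A J * x A * c else 0)).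
  by rewrite -big_mkcond big_pred1_eq.
move=> A _; rewrite big_mkcond (bigD1 J) //= [X in _ + X]big1 ?addr0 => [|B /negPf nBJ]; last first.
  by case: ifP => // _; rewrite !ffunE nBJ !mulr0.
rewrite !ffunE eqxx mulr1.
have -> : (symdiff A J == C) = (A == symdiff C J).
  by rewrite symdiffC symdiff_eq symdiffC.
by case: ifP.
Qed.

Lemma clmul_blade A B :
  clmul (blade A : CL) (blade B) = clscale (blade_sign A B) (blade (symdiff A B)).
Proof.
apply/ffunP => C; rewrite clmul_bladel !ffunE.
have -> : (symdiff A C == B) = (C == symdiff A B).
  by rewrite symdiff_eq.
case: eqP => [->|_]; last by rewrite !mulr0.
by rewrite symdiffK.
Qed.

Lemma clmul_scalel c x y : clmul (clscale c x) y = clscale c (clmul x y).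
Proof.
apply/ffunP => C; rewrite !ffunE mulr_sumr; apply: eq_bigr => A _.
rewrite mulr_sumr; apply: eq_bigr => B _; rewrite !ffunE; ring.
Qed.

Lemma clmul_scaler c x y : clmul x (clscale c y) = clscale c (clmul x y).
Proof.
apply/ffunP => C; rewrite !ffunE mulr_sumr; apply: eq_bigr => A _.
rewrite mulr_sumr; apply: eq_bigr => B _; rewrite !ffunE; ring.
Qed.

Lemma clscale1 x : clscale 1 x = x.
Proof. by apply/ffunP => C; rewrite ffunE mul1r. Qed.

Lemma clscaleM c d x : clscale c (clscale d x) = clscale (c * d) x.
Proof. by apply/ffunP => C; rewrite !ffunE mulrA. Qed.

Definition tt' (i j : 'I_n) : R := if (j < i)%N then -1 else 1.
Definition PP A B : R := \prod_(i in A) \prod_(j in B) tt' i j.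

Lemma blade_signE A B :
  blade_sign A B = PP A B * \prod_(i in A :&: B) sq_sign i.
Proof.
rewrite /blade_sign /PP; congr (_ * _).
rewrite -prodr_const pair_big_dep /=.
rewrite big_mkcond [RHS]big_mkcond; apply: eq_bigr => [[i j]] _ /=.
rewrite inE /= /tt'; case: (i \in A); case: (j \in B); case: (j < i)%N => //.
Qed.


Lemma genupE i : (genup i : CL) = clscale (sq_sign i) (gen i).
Proof.
rewrite /genup /sq_sign; case: ifP => _; first by rewrite clscale1.
by apply/ffunP => C; rewrite !ffunE mulN1r.
Qed.

Lemma ord_trans : transitive (fun i j : 'I_n => (i <= j)%N).
Proof. by move=> y x z; apply: leq_trans. Qed.

Lemma ord_transr : transitive (fun i j : 'I_n => (j <= i)%N).
Proof. by move=> y x z h1 h2; apply: leq_trans h2 h1. Qed.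

Lemma clprod_gen (s : seq 'I_n) :
  sorted (fun i j : 'I_n => (i <= j)%N) s -> uniq s ->
  clprod (map gen s) = blade [set i in s] :> CL.
Proof.
elim: s => [|x s IH] /=.
  by move=> _ _; rewrite /clone; congr blade; apply/setP => i; rewrite !inE.
move=> Hs /andP[xs us].
have Hall := order_path_min ord_trans Hs.
rewrite IH ?(path_sorted Hs) // /gen clmul_blade.
have -> : blade_sign [set x] [set i in s] = 1 :> R.
  rewrite blade_signE /PP big_set1.
  have -> : [set x] :&: [set i in s] = set0.
    apply/setP => i; rewrite !inE; case: eqP => // ->.
    by rewrite (negPf xs).
  rewrite big_set0 mulr1; apply: big1 => j; rewrite inE => js.
  move/allP: Hall => /(_ j js) /= hj.
  by rewrite /tt' ltnNge hj.
rewrite clscale1; congr blade; apply/setP => i; rewrite !inE.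
by case: (i =P x) => [->|_]; rewrite ?xs ?andbF ?andbT.
Qed.

Lemma prodU1 (F : 'I_n -> R) (x : 'I_n) S : x \notin S ->
  \prod_(j in x |: S) F j = F x * \prod_(j in S) F j.
Proof.
move=> xS; rewrite (bigD1 x) ?inE ?eqxx //=; congr (_ * _).
apply: eq_bigl => j; rewrite !inE.
by case: eqP => [->|_] /=; rewrite ?(negPf xS) ?andbT.
Qed.

Lemma sign_up (x : 'I_n) S : x \notin S -> (forall j, j \in S -> (j < x)%N) ->
  blade_sign (x |: S) (x |: S) = sq_sign x * (blade_sign S S * blade_sign [set x] S) :> R.
Proof.
move=> xS Hlt.
rewrite !blade_signE !setIid /PP.
have -> : [set x] :&: S = set0.
  by apply/setP => i; rewrite !inE; case: eqP => // ->; rewrite (negPf xS).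
rewrite big_set0 big_set1 mulr1.
rewrite (prodU1 _ xS) (prodU1 (tt' x) xS) (prodU1 sq_sign xS).
have E : \prod_(i in S) \prod_(j in x |: S) tt' i j = \prod_(i in S) \prod_(j in S) tt' i j.
  apply: eq_bigr => i iS; rewrite (prodU1 (tt' i) xS).
  have -> : tt' i x = 1 by rewrite /tt' ltnNge (ltnW (Hlt i iS)).
  by rewrite mul1r.
rewrite E.
have -> : tt' x x = 1 by rewrite /tt' ltnn.
rewrite mul1r; ring.
Qed.

Lemma clprod_genup (s : seq 'I_n) :
  sorted (fun i j : 'I_n => (j <= i)%N) s -> uniq s ->
  clprod (map genup s) =
  clscale (blade_sign [set i in s] [set i in s]) (blade [set i in s]) :> CL.
Proof.
elim: s => [|x s IH] /=.
  move=> _ _; rewrite /clone.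
  have -> : [set i in [::]] = set0 :> {set 'I_n} by apply/setP => i; rewrite !inE.
  by rewrite blade_signE setIid /PP !big_set0 mulr1 clscale1.
move=> Hs /andP[xs us].
have Hall := order_path_min ord_transr Hs.
rewrite IH ?(path_sorted Hs) // genupE /gen clmul_scalel clmul_scaler clmul_blade !clscaleM.
have -> : [set i in x :: s] = x |: [set i in s].
  by apply/setP => i; rewrite !inE.
have -> : symdiff [set x] [set i in s] = x |: [set i in s].
  apply/setP => i; rewrite !inE.
  by case: (i =P x) => [->|_]; rewrite ?xs ?andbF ?andbT.
rewrite sign_up ?inE //; last first.
  move=> j; rewrite inE => js; move/allP: Hall => /(_ j js) /= hj.
  rewrite ltn_neqAle hj andbT; apply/eqP => ej.
  have ejx : j = x by apply: val_inj.
  by move: js; rewrite ejx (negPf xs).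
by rewrite mulrA.
Qed.

Lemma e_lowE J : e_low J = blade J :> CL.
Proof.
rewrite /e_low /incr clprod_gen.
- by congr blade; apply/setP => i; rewrite inE mem_sort mem_enum.
- by apply: sort_sorted => i j; apply: leq_total.
- by rewrite sort_uniq enum_uniq.
Qed.

Lemma e_upE J : e_up J = clscale (blade_sign J J) (blade J) :> CL.
Proof.
rewrite /e_up /incr clprod_genup.
- have -> : [set i in rev (sort (fun i j : 'I_n => (i <= j)%N) (enum J))] = J.
    by apply/setP => i; rewrite inE mem_rev mem_sort mem_enum.
  by [].
- by rewrite rev_sorted; apply: sort_sorted => i j; apply: leq_total.
- by rewrite rev_uniq sort_uniq enum_uniq.
Qed.


Lemma tt2 (i j : 'I_n) : tt' i j * tt' i j = 1.
Proof. by rewrite /tt'; case: ifP; rewrite ?mulr1 ?mulrNN ?mulr1. Qed.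

Lemma sq2 (i : 'I_n) : sq_sign i * sq_sign i = 1 :> R.
Proof. by rewrite /sq_sign; case: ifP; rewrite ?mulr1 ?mulrNN ?mulr1. Qed.

Lemma PP2 A B : PP A B * PP A B = 1.
Proof.
rewrite /PP -big_split big1 // => i _; rewrite -big_split big1 // => j _.
exact: tt2.
Qed.

Lemma Q2 S : \prod_(i in S) sq_sign i * \prod_(i in S) sq_sign i = 1 :> R.
Proof. by rewrite -big_split big1 // => i _; exact: sq2. Qed.

Lemma prod_symdiff (f : 'I_n -> R) J C : (forall i, f i * f i = 1) ->
  \prod_(i in symdiff J C) f i = \prod_(i in J) f i * \prod_(i in C) f i.
Proof.
move=> hf; rewrite big_mkcond [X in _ = X * _]big_mkcond [X in _ = _ * X]big_mkcond.
rewrite -big_split /=; apply: eq_bigr => i _; rewrite !inE.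
by case: (i \in J); case: (i \in C); rewrite /= ?mulr1 ?mul1r ?hf.
Qed.

Lemma PPsymdiffl J C B : PP (symdiff J C) B = PP J B * PP C B.
Proof.
rewrite /PP prod_symdiff // => i; rewrite -big_split big1 // => j _; exact: tt2.
Qed.

Lemma Q_split (f : 'I_n -> R) J C :
  \prod_(i in J :&: C) f i * \prod_(i in symdiff J C :&: J) f i = \prod_(i in J) f i.
Proof.
rewrite big_mkcond [X in _ * X = _]big_mkcond [X in _ = X]big_mkcond.
rewrite -big_split /=; apply: eq_bigr => i _; rewrite !inE.
by case: (i \in J); case: (i \in C); rewrite /= ?mulr1 ?mul1r.
Qed.

Definition gC C (i : 'I_n) : R := (-1) ^+ #|C| * (if i \in C then -1 else 1).

Lemma tt_pair (i j : 'I_n) : tt' i j * tt' j i = -1 * (if j == i then -1 else 1).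
Proof.
case: (eqVneq j i) => [->|ne]; first by rewrite /tt' ltnn mulr1 mulrNN mulr1.
rewrite mulr1.
have nv : (nat_of_ord j) != i by [].
move: nv; rewrite neq_ltn => /orP[h|h]; rewrite /tt' h.
  by rewrite ltnNge (ltnW h) /= mulr1.
by rewrite ltnNge (ltnW h) /= mul1r.
Qed.

Lemma PPpair J C : PP J C * PP C J = \prod_(i in J) gC C i.
Proof.
rewrite /PP [X in _ * X = _](exchange_big) -big_split; apply: eq_bigr => i _.
rewrite -big_split /=.
under eq_bigr => j _ do rewrite tt_pair.
rewrite big_split prodr_const /gC; congr (_ * _).
case: (boolP (i \in C)) => iC.
  rewrite (bigD1 i) //= eqxx big1 ?mulr1 // => j /andP[_ /negPf ->] //.
apply: big1 => j jC; case: eqP => // ej; move: iC; rewrite -ej jC //.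
Qed.

Lemma term J C :
  blade_sign J J * (blade_sign J C * blade_sign (symdiff J C) J) = \prod_(i in J) gC C i.
Proof.
rewrite !blade_signE PPsymdiffl setIid -PPpair.
have HQ := Q_split sq_sign J C.
transitivity (PP J J * PP J J * (\prod_(i in J) sq_sign i * \prod_(i in J) sq_sign i)
   * (PP J C * PP C J)); first by rewrite -HQ; ring.
by rewrite PP2 Q2 !mul1r.
Qed.

Lemma sum_prod (g : 'I_n -> R) :
  \sum_(J : {set 'I_n}) \prod_(i in J) g i = \prod_(i : 'I_n) (g i + 1).
Proof.
rewrite bigA_distr; apply: eq_big => // J.
by move=> _; rewrite big_mkcond.
Qed.

Lemma coef J a C : clmul (clmul (e_low J) a) (e_up J) C = \prod_(i in J) gC C i * a C.
Proof.
rewrite e_lowE e_upE clmul_blader clmul_bladel [symdiff C J]symdiffC symdiffK -term.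
ring.
Qed.

Lemma prod2 : \prod_(i : 'I_n) (2 : R) = 2 ^+ n.
Proof. by rewrite prodr_const card_ord. Qed.

End H.

Section Fin.
Variables (R : comNzRingType) (p q : nat).
Local Notation n := (p + q)%N.

Lemma princE (a : {ffun {set 'I_n} -> R}) (C : {set 'I_n}) : princ a C = (-1) ^+ #|C| * a C.
Proof.
rewrite /princ sum_ffunE.
under eq_bigr => k _ do rewrite !ffunE.
have hC : (#|C| < n.+1)%N.
  by rewrite ltnS; apply: leq_trans (max_card _) _; rewrite card_ord.
rewrite (bigD1 (Ordinal hC)) //= eqxx big1 ?addr0 // => k nk.
case: eqP => [ek|]; last by rewrite mulr0.
by case/eqP: nk; apply: val_inj; rewrite /= ek.
Qed.

Lemma Tval (C : {set 'I_n}) : \prod_(i : 'I_n) (gC R C i + 1) =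
  if C == set0 then 2 ^+ n else if (C == setT) && odd n then 2 ^+ n else 0 :> R.
Proof.
case: eqP => [->|/eqP C0].
  rewrite -prod2; apply: eq_bigr => i _; rewrite /gC cards0 inE expr0 mul1r.
  by rewrite -mulr2n.
case/set0Pn: C0 => x xC.
case: (boolP (odd #|C|)) => oC.
  case: eqP => [CT|/eqP CT].
    have on : odd n by move: oC; rewrite CT cardsT card_ord.
    rewrite on -prod2; apply: eq_bigr => i _; rewrite /gC CT inE -signr_odd.
    by rewrite -CT oC expr1 mulrNN mulr1 -mulr2n.
  case: (pickP (fun y => y \notin C)) => [y yC | H]; last first.
    by case/eqP: CT; apply/setP => z; rewrite inE; move: (H z) => /negbFE.
  rewrite /= (bigD1 y) //= /gC (negPf yC) -signr_odd oC expr1 mulr1 addNr mul0r.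
  by [].
have -> : (C == setT) && odd n = false.
  case: eqP => // CT /=; move: oC; rewrite CT cardsT card_ord.
  by move/negbTE.
rewrite (bigD1 x) //= /gC xC -signr_odd (negbTE oC) expr0 mul1r addNr mul0r.
by [].
Qed.

End Fin.

Theorem theorem1 (R : realType) (p q : nat) (a : {ffun {set 'I_(p + q)} -> R}) :
  (0 < p + q)%N ->
  (~~ odd (p + q) ->
     grade 0 a =
       clscale (((2 : R) ^+ (p + q))^-1)
         (\sum_(J : {set 'I_(p + q)}) clmul (clmul (e_low J) a) (e_up J))) /\
  (odd (p + q) ->
     grade 0 a =
       clscale (((2 : R) ^+ (p + q).+1)^-1)
         (\sum_(J : {set 'I_(p + q)}) clmul (clmul (e_low J) a) (e_up J))
     + clscale (((2 : R) ^+ (p + q).+1)^-1)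
         (\sum_(J : {set 'I_(p + q)}) clmul (clmul (e_low J) (princ a)) (e_up J))).
Proof.
move=> n0.
have S (b : {ffun {set 'I_(p + q)} -> R}) (C : {set 'I_(p + q)}) :
  (\sum_(J : {set 'I_(p + q)}) clmul (clmul (e_low J) b) (e_up J)) C =
  \prod_(i : 'I_(p + q)) (gC R C i + 1) * b C.
  rewrite sum_ffunE; under eq_bigr => J _ do rewrite coef.
  by rewrite -big_distrl /= sum_prod.
have h2 : (2 : R) ^+ (p + q) != 0 by rewrite expf_neq0 // pnatr_eq0.
have h2' : (2 : R) ^+ (p + q).+1 != 0 by rewrite expf_neq0 // pnatr_eq0.
split => [ev|od]; apply/ffunP => C; rewrite !ffunE ?S Tval.
  case: (C =P set0) => [->|/eqP C0]; first by rewrite cards0 /= mulrA mulVf // mul1r.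
  rewrite (negbTE ev) andbF mul0r mulr0.
  by rewrite cards_eq0 (negbTE C0).
rewrite ?ffunE ?S ?Tval princE od andbT.
case: (C =P set0) => [->|/eqP C0].
  rewrite cards0 /= expr0 mul1r exprS.
  by field.
case: (C =P setT) => [CT|/eqP CT].
  rewrite CT cardsT card_ord -signr_odd od expr1 (negbTE (lt0n_neq0 n0)).
  ring.
by rewrite cards_eq0 (negbTE C0) !mul0r mulr0 addr0.
Qed.

Print Assumptions theorem1.
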